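(* There exists a two-way optical interference automaton (2OIA) that recognizes the language $L_{pal}=\{ww^R\mid w\in\{a,b\}^*\}$ (where $w^R$ is $w$ reversed) in $O(n^2)$ time, where $n$ is the input length, with no restriction on the wavelength of the light.
   Context: A two-way optical interference automaton (2OIA) is a deterministic machine with finite state set $Q$, start state $q_0$, accepting and rejecting states, finite input alphabet $\Sigma$, and tape alphabet $\Gamma=\Sigma\cup\{\text{¢},\$\}$. On input $w=w_1\cdots w_n$ the read-only tape holds ¢$w_1\cdots w_n\$$ in cells $0,1,\dots,n+1$, scanned by a two-way head. For each cell $m$ there is a monochromatic point light source at the point $(m,0)$ of the plane; all sources have the same wavelength $\lambda$ and the same initial amplitude $A_0$, and each source is at any moment either switched off or switched on with initial phase $0$ or $\pi$. A detector is located at a grid point $(j,k)$ with $j,k\in\{0,\tfrac12,1,\tfrac32,\dots,n+1\}$, pointing towards the source array; its field of vision is the cone making angle $\pi/4$ with the vertical line through it, so it sees exactly the sources at $(m,0)$ with $|m-j|\le k$. The resultant wave at the detector is $\sum A_0 r_m^{-1}e^{i(\phi_m+2\pi r_m/\lambda)}$, summed over the switched-on sources it sees, where $r_m$ is the distance from the source to the detector and $\phi_m\in\{0,\pi\}$ the source's phase; the detector outputs $\underline{1}$ if this resultant is nonzero and $\underline{0}$ otherwise. The transition function $\delta:Q\times\Gamma\times\{\underline0,\underline1\}\to Q\times\{\text{left},\text{right},\text{stay}\}\times\{\text{left},\text{right},\text{up},\text{down},\text{stay}\}\times\{\mathrm{toggle}(0),\mathrm{toggle}(\pi),-\}$ maps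 (state, scanned symbol, detector output) to a new state, a move of the head by one cell, a move of the detector by one grid step (of length $1/2$), and an action on the source of the currently scanned cell: $\mathrm{toggle}(\phi)$ switches it on with phase $\phi$ if it is off and switches it off if it is on; $-$ does nothing. Initially all sources are off, the machine is in $q_0$, the head is on cell $0$, and the detector is at a prescribed initial grid position. For a given source, a maximal sequence of toggles at consecutive time steps is called non-transient if its length is odd; there is a constant $k$ such that the machine crashes if it attempts a non-transient toggle sequence on a single source for the $(k+1)$-th time. The machine accepts when it is in an accepting state with detector output $\underline0$. Its running time is the total number of moves made by the head plus the number of moves made by the detector. A 2OIA recognizes a language $L$ if it accepts every input in $L$ and rejects every input not in $L$. *)

(* Defs.v *)
From Stdlib Require Import Reals List FinFun Arith Bool.
Import ListNotations.

Set Implicit Arguments.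

Inductive sym : Type := sa | sb.

Inductive tsym : Type := cent | dollar | letter (x : sym).

Inductive hmove : Type := HLeft | HRight | HStay.
Inductive dmove : Type := DLeft | DRight | DUp | DDown | DStay.
Inductive phase : Type := Ph0 | PhPi.
Inductive action : Type := Toggle (p : phase) | NoAct.

Inductive srcst : Type := Off | On (p : phase).

(** Tape contents on input w (length n): cell 0 = ¢, cells 1..n = w, cell n+1 = $. *)
Definition tape (w : list sym) (m : nat) : tsym :=
  match m with
  | O => cent
  | S i => match nth_error w i with Some x => letter x | None => dollar end
  end.

(** The detector position is measured in half-units: the pair (J,K)
    of naturals denotes the grid point (J/2, K/2); the grid is
    0 <= J, K <= 2(n+1).  [det_init n] is the prescribed initial detector
    position on inputs of length n.  [kmax] is the constant k of the
    non-transient-toggle restriction. *)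
Record OIA : Type := mkOIA {
  Q : Type;
  Q_finite : Finite Q;
  q0 : Q;
  accepting : Q -> bool;
  rejecting : Q -> bool;
  acc_rej_disjoint : forall q, accepting q = true -> rejecting q = false;
  delta : Q -> tsym -> bool -> Q * hmove * dmove * action;
  det_init : nat -> nat * nat;
  det_init_ok : forall n, fst (det_init n) <= 2 * (n + 1) /\ snd (det_init n) <= 2 * (n + 1);
  kmax : nat
}.

(** The detector at (J/2, K/2) sees the source at (m,0) iff |m - J/2| <= K/2. *)
Definition sees (J K m : nat) : bool := (2 * m <=? J + K) && (J <=? 2 * m + K).

Definition dist (J K m : nat) : R :=
  sqrt (Rsqr (INR m - INR J / 2) + Rsqr (INR K / 2)).

Definition phase_val (p : phase) : R := match p with Ph0 => 0%R | PhPi => PI end.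

(** Contribution of source m to the real part (f = cos) resp. imaginary part
    (f = sin) of  A0 r^-1 e^{i(phi + 2 pi r / lambda)}. *)
Definition contrib (f : R -> R) (lam A0 : R) (J K : nat) (s : nat -> srcst) (m : nat) : R :=
  if sees J K m then
    match s m with
    | Off => 0%R
    | On p => (A0 / dist J K m * f (phase_val p + 2 * PI * dist J K m / lam))%R
    end
  else 0%R.

Definition resultant_part (f : R -> R) (n : nat) (lam A0 : R) (J K : nat) (s : nat -> srcst) : R :=
  fold_right (fun m acc => (contrib f lam A0 J K s m + acc)%R) 0%R (seq 0 (n + 2)).

Definition is_on (x : srcst) : bool := match x with Off => false | On _ => true end.

(** Convention for the degenerate case r = 0 (detector sitting exactly on a
    switched-on source): the resultant is infinite, hence nonzero. *)
Definition on_switched_source (J K : nat) (s : nat -> srcst) : bool :=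
  (K =? 0) && Nat.even J && is_on (s (Nat.div2 J)).

(** Detector output: true = 1 (resultant nonzero), false = 0. *)
Definition det_out (n : nat) (lam A0 : R) (J K : nat) (s : nat -> srcst) : bool :=
  if on_switched_source J K s then true
  else if Req_EM_T (resultant_part cos n lam A0 J K s) 0%R then
         (if Req_EM_T (resultant_part sin n lam A0 J K s) 0%R then false else true)
       else true.

Record cfg (Qt : Type) : Type := mkCfg {
  st : Qt;
  hd : nat;
  dj : nat;
  dk : nat;
  srcs : nat -> srcst;
  nt_count : nat -> nat;          (* number of completed non-transient toggle sequences per source *)
  pending : option (nat * bool);  (* source toggled at the previous step and parity of the
                                     current maximal toggle sequence (true = odd length) *)
  moves : nat                     (* head moves + detector moves so far *)
}.

Inductive result (Qt : Type) : Type :=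
| Running (c : cfg Qt)
| Crashed (mv : nat)
| Halted (c : cfg Qt).

(** Close the current maximal toggle sequence; crash (None) if it is the
    (k+1)-th non-transient (odd-length) one on its source. *)
Definition finalize (k : nat) (cnt : nat -> nat) (p : option (nat * bool)) : option (nat -> nat) :=
  match p with
  | Some (m, true) =>
      let c := S (cnt m) in
      if k <? c then None else Some (fun i => if i =? m then c else cnt i)
  | _ => Some cnt
  end.

Definition toggle_src (p : phase) (x : srcst) : srcst :=
  match x with Off => On p | On _ => Off end.

Definition halting (M : OIA) (q : Q M) : bool := accepting M q || rejecting M q.

Definition move_head (n h : nat) (hm : hmove) : option nat :=
  match hm with
  | HLeft => match h with O => None | S h' => Some h' end
  | HRight => if h <? n + 1 then Some (S h) else None
  | HStay => Some h
  end.

Definition move_det (n J K : nat) (dm : dmove) : option (nat * nat) :=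
  match dm with
  | DLeft => match J with O => None | S J' => Some (J', K) end
  | DRight => if J <? 2 * (n + 1) then Some (S J, K) else None
  | DUp => if K <? 2 * (n + 1) then Some (J, S K) else None
  | DDown => match K with O => None | S K' => Some (J, K') end
  | DStay => Some (J, K)
  end.

Definition step (M : OIA) (lam A0 : R) (w : list sym) (c : cfg (Q M)) : result (Q M) :=
  let n := length w in
  let o := det_out n lam A0 (dj c) (dk c) (srcs c) in
  match delta M (st c) (tape w (hd c)) o with
  | (q', hm, dm, a) =>
    let h := hd c in
    let mv := moves c + (match hm with HStay => 0 | _ => 1 end)
                      + (match dm with DStay => 0 | _ => 1 end) in
    let toggled := match a with Toggle _ => true | NoAct => false end in
    let srcs' := match a with
                 | Toggle p => fun i => if i =? h then toggle_src p (srcs c h) else srcs c i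
                 | NoAct => srcs c
                 end in
    let cont_run := match pending c with Some (m, _) => toggled && (m =? h) | None => false end in
    let cnt1 := if cont_run then Some (nt_count c) else finalize (kmax M) (nt_count c) (pending c) in
    let pend1 := if cont_run
                 then match pending c with Some (m, par) => Some (m, negb par) | None => None end
                 else if toggled then Some (h, true) else None in
    match cnt1, move_head n h hm, move_det n (dj c) (dk c) dm with
    | Some cnt1', Some h', Some (J', K') =>
        if halting M q' then
          match finalize (kmax M) cnt1' pend1 with
          | Some cnt2 => Halted (mkCfg q' h' J' K' srcs' cnt2 None mv)
          | None => Crashed (Q M) mv
          end
        else Running (mkCfg q' h' J' K' srcs' cnt1' pend1 mv)
    | _, _, _ => Crashed (Q M) mv
    end
  end.

Definition init_cfg (M : OIA) (w : list sym) : cfg (Q M) :=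
  mkCfg (q0 M) 0 (fst (det_init M (length w))) (snd (det_init M (length w)))
        (fun _ => Off) (fun _ => 0) None 0.

Definition init_result (M : OIA) (w : list sym) : result (Q M) :=
  if halting M (q0 M) then Halted (init_cfg M w) else Running (init_cfg M w).

Fixpoint run (M : OIA) (lam A0 : R) (w : list sym) (t : nat) : result (Q M) :=
  match t with
  | O => init_result M w
  | S t' => match run M lam A0 w t' with
            | Running c => step M lam A0 w c
            | r => r
            end
  end.

Definition terminated (Qt : Type) (r : result Qt) : Prop :=
  match r with Running _ => False | _ => True end.

Definition res_moves (Qt : Type) (r : result Qt) : nat :=
  match r with Running c => moves c | Crashed _ m => m | Halted c => moves c end.

Definition accepted_res (M : OIA) (lam A0 : R) (w : list sym) (r : result (Q M)) : Prop :=
  match r with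
  | Halted c => accepting M (st c) = true /\
                det_out (length w) lam A0 (dj c) (dk c) (srcs c) = false
  | _ => False
  end.

(** M recognizes L (for wavelength lam and amplitude A0) within running time
    T(n): on every input the computation terminates (halts or crashes) after
    at most T(n) head+detector moves, and it is accepting iff w is in L
    (every other terminated computation is a rejection). *)
Definition recognizes_in_time (M : OIA) (lam A0 : R) (L : list sym -> Prop) (T : nat -> nat) : Prop :=
  forall w : list sym, exists t : nat,
    terminated (run M lam A0 w t) /\
    res_moves (run M lam A0 w t) <= T (length w) /\
    (accepted_res M lam A0 w (run M lam A0 w t) <-> L w).

Definition Lpal (x : list sym) : Prop := exists u : list sym, x = u ++ rev u.

(* Main.v *)
Require Import Defs.
From Stdlib Require Import Reals List FinFun Arith Bool Lia.
Import ListNotations.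

Inductive vq : Type := Par (b : bool) | Back | TT | G1 (x : sym) | G2 (x : sym)
  | G3 (x : sym) | G4 | G5 | Acc | Rej.
Inductive cmv : Type := Inc | Dec | CStay.

Definition is_cent (s : tsym) := match s with cent => true | _ => false end.
Definition is_dollar (s : tsym) := match s with dollar => true | _ => false end.
Definition sym_eqb (x y : sym) := match x, y with sa, sa => true | sb, sb => true | _, _ => false end.

Definition vdelta (v : vq) (s : tsym) (z : bool) : vq * hmove * cmv :=
 match v with
 | Par b => if is_dollar s then ((if b then Rej else Back), HStay, CStay)
            else if is_cent s then (Par b, HRight, CStay) else (Par (negb b), HRight, CStay)
 | Back => if is_cent s then (TT, HStay, Inc) else (Back, HLeft, CStay)
 | TT => if z then match s with letter x => (G1 x, HStay, CStay)
                  | dollar => (Acc, HStay, Inc) | cent => (Rej, HStay, CStay) end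
        else (TT, HRight, Dec)
 | G1 x => if is_cent s then (G2 x, HStay, CStay) else (G1 x, HLeft, Inc)
 | G2 x => if is_dollar s then (G3 x, HStay, CStay) else (G2 x, HRight, CStay)
 | G3 x => if z then match s with letter y => if sym_eqb x y then (G4, HStay, CStay)
                                             else (Rej, HStay, CStay)
                  | _ => (Rej, HStay, CStay) end
           else (G3 x, HLeft, Dec)
 | G4 => if is_dollar s then (G5, HStay, CStay) else (G4, HRight, Inc)
 | G5 => if is_cent s then (TT, HStay, Inc) else (G5, HLeft, CStay)
 | Acc => (Acc, HStay, CStay)
 | Rej => (Rej, HStay, CStay)
 end.

Definition vhalting (v : vq) := match v with Acc | Rej => true | _ => false end.

Inductive rq : Type := Init1 | Init2 | VA (v : vq) | VB (v : vq) (cm : cmv).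

Definition half (cm : cmv) : dmove := match cm with Inc => DRight | Dec => DLeft | CStay => DStay end.

Definition rdelta (q : rq) (s : tsym) (b : bool) : rq * hmove * dmove * action :=
  match q with
  | Init1 => (Init2, HStay, DStay, Toggle Ph0)
  | Init2 => (VA (Par false), HStay, DStay, NoAct)
  | VA v => let '(v', hm, cm) := vdelta v s b in (VB v' cm, hm, half cm, NoAct)
  | VB v cm => (VA v, HStay, half cm, NoAct)
  end.

Definition racc (q : rq) := match q with VA Acc => true | _ => false end.
Definition rrej (q : rq) := match q with VA Rej => true | _ => false end.

Definition allv : list vq := [Par true; Par false; Back; TT; G1 sa; G1 sb; G2 sa; G2 sb;
  G3 sa; G3 sb; G4; G5; Acc; Rej].

Lemma allv_full : forall v, In v allv.
Proof. intros v; destruct v as [[|]| | |[|]|[|]|[|]| | | |]; simpl; tauto. Qed.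

Lemma rq_finite : Finite rq.
Proof.
  exists ([Init1; Init2] ++ map VA allv ++ flat_map (fun v => map (VB v) [Inc; Dec; CStay]) allv).
  intros q. apply in_or_app. destruct q as [| |v|v cm].
  - left; simpl; auto.
  - left; simpl; auto.
  - right; apply in_or_app; left; apply in_map; apply allv_full.
  - right; apply in_or_app; right; apply in_flat_map. exists v; split; [apply allv_full|].
    destruct cm; simpl; auto.
Qed.

Lemma racc_rej : forall q, racc q = true -> rrej q = false.
Proof. intros [| |[]|] ; simpl; congruence. Qed.

Lemma det_init_ok0 : forall n : nat, fst (0%nat, 0%nat) <= 2 * (n + 1) /\ snd (0%nat, 0%nat) <= 2 * (n + 1).
Proof. intros; simpl. split; lia. Qed.

Definition M : OIA := mkOIA rq_finite Init1 racc rrej racc_rej rdelta (fun _ => (0%nat, 0%nat)) det_init_ok0 1.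

Lemma sees_K0 J m : sees J 0 m = (J =? 2 * m).
Proof.
  unfold sees. rewrite !Nat.add_0_r.
  destruct (2 * m <=? J) eqn:E1, (J <=? 2 * m) eqn:E2, (J =? 2 * m) eqn:E3; try reflexivity;
  repeat match goal with
  | H : (_ <=? _) = true |- _ => apply Nat.leb_le in H
  | H : (_ <=? _) = false |- _ => apply Nat.leb_nle in H
  | H : (_ =? _) = true |- _ => apply Nat.eqb_eq in H
  | H : (_ =? _) = false |- _ => apply Nat.eqb_neq in H
  end; try (exfalso; lia).
Qed.

Lemma res_zero f n lam A0 J s :
  (forall m, sees J 0 m = true -> s m = Off) -> resultant_part f n lam A0 J 0 s = 0%R.
Proof.
  intros H. unfold resultant_part. induction (seq 0 (n + 2)) as [|a l IH]; simpl; auto.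
  rewrite IH. unfold contrib. destruct (sees J 0 a) eqn:E.
  - rewrite (H a E). ring.
  - ring.
Qed.

Lemma det_out_K0 n lam A0 J s :
  det_out n lam A0 J 0 s = Nat.even J && is_on (s (Nat.div2 J)).
Proof.
  unfold det_out, on_switched_source. simpl.
  destruct (Nat.even J && is_on (s (Nat.div2 J))) eqn:E; auto.
  rewrite !res_zero.
  - destruct (Req_EM_T 0 0); [|congruence]. reflexivity.
  - intros m Hm. rewrite sees_K0 in Hm. apply Nat.eqb_eq in Hm. subst.
    rewrite Nat.even_even, Nat.div2_double in E. simpl in E. destruct (s m); simpl in *; congruence.
  - intros m Hm. rewrite sees_K0 in Hm. apply Nat.eqb_eq in Hm. subst.
    rewrite Nat.even_even, Nat.div2_double in E. simpl in E. destruct (s m); simpl in *; congruence.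
Qed.

Lemma step_na lam A0 w (c : cfg rq) q' hm dm h' J' K' :
  pending c = None ->
  rdelta (st c) (tape w (Defs.hd c)) (det_out (length w) lam A0 (dj c) (dk c) (srcs c)) = (q', hm, dm, NoAct) ->
  move_head (length w) (Defs.hd c) hm = Some h' ->
  move_det (length w) (dj c) (dk c) dm = Some (J', K') ->
  exists mv, step M lam A0 w c =
    if halting M q' then Halted (mkCfg q' h' J' K' (srcs c) (nt_count c) None mv)
    else Running (mkCfg q' h' J' K' (srcs c) (nt_count c) None mv).
Proof.
  intros Hp Hd Hh Hj. destruct c as [q h J K s cnt p mv]. simpl in *. subst p.
  unfold step. simpl. rewrite Hd. rewrite Hh, Hj. eexists. reflexivity.
Qed.

Definition vcfg := (vq * nat * nat)%type.
Inductive vres : Type := VRun (x : vcfg) | VHalt (x : vcfg) | VCrash.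

Definition cmove (n j : nat) (cm : cmv) : option nat :=
  match cm with
  | Inc => if j <? n + 1 then Some (S j) else None
  | Dec => match j with O => None | S j' => Some j' end
  | CStay => Some j
  end.

Definition vstep (w : list sym) (x : vcfg) : vres :=
  let '(v, h, j) := x in
  let '(v', hm, cm) := vdelta v (tape w h) (j =? 0) in
  match move_head (length w) h hm, cmove (length w) j cm with
  | Some h', Some j' => if vhalting v' then VHalt (v', h', j') else VRun (v', h', j')
  | _, _ => VCrash
  end.

Fixpoint vrun (w : list sym) (x : vcfg) (t : nat) : vres :=
  match t with
  | O => VRun x
  | S t' => match vstep w x with VRun y => vrun w y t' | r => r end
  end.

Fixpoint runc lam A0 w (c : cfg rq) (t : nat) : result rq :=
  match t with
  | O => Running c
  | S t' => match step M lam A0 w c with Running c' => runc lam A0 w c' t' | r => r end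
  end.

Lemma runc_add lam A0 w a b c :
  runc lam A0 w c (a + b) = match runc lam A0 w c a with Running c' => runc lam A0 w c' b | r => r end.
Proof.
  revert c; induction a; intros c; simpl; auto.
  destruct (step M lam A0 w c); auto.
Qed.

Lemma runc_last lam A0 w t c :
  runc lam A0 w c (S t) = match runc lam A0 w c t with Running c' => step M lam A0 w c' | r => r end.
Proof.
  rewrite <- Nat.add_1_r, runc_add. destruct (runc lam A0 w c t); auto.
  simpl. destruct (step M lam A0 w c0); auto.
Qed.

Lemma run_runc lam A0 w t : run M lam A0 w t = runc lam A0 w (init_cfg M w) t.
Proof.
  induction t; simpl.
  - reflexivity.
  - rewrite IHt, <- runc_last. reflexivity.
Qed.

Lemma step_moves lam A0 w (c : cfg rq) : res_moves (step M lam A0 w c) <= moves c + 2.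
Proof.
  destruct c as [q h J K s cnt p mv]. unfold step. simpl.
  destruct (rdelta q (tape w h) _) as [[[q' hm] dm] a].
  repeat match goal with
  | |- context [match ?x with _ => _ end] => destruct x
  | |- context [if ?x then _ else _] => destruct x
  end; simpl; lia.
Qed.

Lemma runc_moves lam A0 w t : forall c, res_moves (runc lam A0 w c t) <= moves c + 2 * t.
Proof.
  induction t; intros c; simpl. lia.
  pose proof (step_moves lam A0 w c) as Hs.
  destruct (step M lam A0 w c) as [c'|m|c'] eqn:E; simpl in *.
  - specialize (IHt c'). lia.
  - lia.
  - lia.
Qed.

Definition S1 (i : nat) : srcst := if i =? 0 then On Ph0 else Off.

Definition Good (c : cfg rq) (x : vcfg) : Prop :=
  let '(v, h, j) := x in
  st c = VA v /\ Defs.hd c = h /\ dj c = 2 * j /\ dk c = 0 /\ (forall i, srcs c i = S1 i) /\ pending c = None.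

Lemma half_ok n j cm j' : cmove n j cm = Some j' ->
  exists J1, move_det n (2 * j) 0 (half cm) = Some (J1, 0) /\ move_det n J1 0 (half cm) = Some (2 * j', 0).
Proof.
  destruct cm; intros H; cbn [cmove] in H; unfold half, move_det.
  - destruct (j <? n + 1) eqn:E; [|discriminate]. injection H as <-. apply Nat.ltb_lt in E.
    exists (S (2 * j)). split.
    + replace (2 * j <? 2 * (n + 1)) with true by (symmetry; apply Nat.ltb_lt; lia). reflexivity.
    + replace (S (2 * j) <? 2 * (n + 1)) with true by (symmetry; apply Nat.ltb_lt; lia).
      f_equal. f_equal. lia.
  - destruct j as [|j0]; [discriminate|]. injection H as <-.
    replace (2 * S j0) with (S (S (2 * j0))) by lia. exists (S (2 * j0)). split; reflexivity.
  - injection H as <-. exists (2 * j). split; reflexivity.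
Qed.

Lemma halting_VA v : halting M (VA v) = vhalting v.
Proof. destruct v; reflexivity. Qed.

Lemma sim1 lam A0 w x c :
  Good c x ->
  (forall y, vstep w x = VRun y -> exists c', runc lam A0 w c 2 = Running c' /\ Good c' y) /\
  (forall y, vstep w x = VHalt y -> exists c', runc lam A0 w c 2 = Halted c' /\ Good c' y).
Proof.
  destruct x as [[v h] j]. intros (Hq & Hh & HJ & HK & Hs & Hp).
  unfold vstep.
  destruct (vdelta v (tape w h) (j =? 0)) as [[v' hm] cm] eqn:E.
  destruct (move_head (length w) h hm) as [h'|] eqn:Eh; [|split; intros; discriminate].
  destruct (cmove (length w) j cm) as [j'|] eqn:Ej; [|split; intros; discriminate].
  destruct (half_ok _ _ _ _ Ej) as (J1 & HJ1 & HJ2).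
  assert (Hst1 : exists mv, step M lam A0 w c =
     Running (mkCfg (VB v' cm) h' J1 0 (srcs c) (nt_count c) None mv)).
  { edestruct (step_na lam A0 w c (VB v' cm) hm (half cm) h' J1 0) as [mv Hmv].
    - exact Hp.
    - rewrite Hq, Hh, HJ, HK, det_out_K0, Nat.even_even, Nat.div2_double, Hs. simpl.
      replace (is_on (S1 j)) with (j =? 0) by (destruct j; reflexivity). rewrite E. reflexivity.
    - rewrite Hh; exact Eh.
    - rewrite HJ, HK; exact HJ1.
    - exists mv; exact Hmv. }
  destruct Hst1 as [mv1 Hst1].
  edestruct (step_na lam A0 w (mkCfg (VB v' cm) h' J1 0 (srcs c) (nt_count c) None mv1)
               (VA v') HStay (half cm) h' (2 * j') 0) as [mv2 Hmv2]; simpl; eauto.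
  rewrite halting_VA in Hmv2.
  split; intros y Hy.
  - destruct (vhalting v') eqn:Hv; [discriminate|]. injection Hy as <-.
    eexists. split.
    + simpl. rewrite Hst1. rewrite Hmv2. reflexivity.
    + simpl. repeat split; auto.
  - destruct (vhalting v') eqn:Hv; [|discriminate]. injection Hy as <-.
    eexists. split.
    + simpl. rewrite Hst1. rewrite Hmv2. reflexivity.
    + simpl. repeat split; auto.
Qed.

Lemma vsim lam A0 w t : forall x c y, Good c x -> vrun w x t = VHalt y ->
  exists c', runc lam A0 w c (2 * t) = Halted c' /\ Good c' y.
Proof.
  induction t; intros x c y Hg Hr; simpl in Hr. discriminate.
  destruct (sim1 lam A0 w x c Hg) as [H1 H2].
  replace (2 * S t) with (2 + 2 * t) by lia. rewrite runc_add.
  destruct (vstep w x) as [x'|x'|] eqn:E.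
  - destruct (H1 x' eq_refl) as (c1 & Hc1 & Hg1). rewrite Hc1. eapply IHt; eauto.
  - injection Hr as <-. destruct (H2 x' eq_refl) as (c1 & Hc1 & Hg1). rewrite Hc1. eauto.
  - discriminate.
Qed.

Lemma init2 lam A0 w : exists c, runc lam A0 w (init_cfg M w) 2 = Running c /\ Good c (Par false, 0, 0).
Proof.
  eexists. split.
  - simpl. unfold step. simpl. reflexivity.
  - simpl. repeat split; auto; try (intros [|i]; reflexivity).
Qed.

Section Alg.
Variable w : list sym.
Let n := length w.

Lemma tape0 : tape w 0 = cent.
Proof. reflexivity. Qed.

Lemma is_cent_tape h : is_cent (tape w h) = (h =? 0).
Proof. destruct h; simpl; auto. destruct (nth_error w h); reflexivity. Qed.

Lemma is_dollar_tape h : is_dollar (tape w h) = (S n <=? h).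
Proof.
  destruct h; simpl; auto. destruct (nth_error w h) eqn:E; simpl.
  - symmetry. apply Nat.leb_nle. assert (h < length w) by (apply nth_error_Some; congruence).
    unfold n; lia.
  - symmetry. apply Nat.leb_le. apply nth_error_None in E. unfold n; lia.
Qed.

Lemma tape_mid h : 1 <= h <= n -> exists x, tape w h = letter x /\ nth_error w (h - 1) = Some x.
Proof.
  intros Hh. destruct h as [|h]; [lia|]. simpl. replace (h - 0) with h by lia.
  destruct (nth_error w h) eqn:E.
  - eauto.
  - apply nth_error_None in E. unfold n in Hh. lia.
Qed.

Lemma vrun_S x y t : vstep w x = VRun y -> vrun w x (S t) = vrun w y t.
Proof. intros H; simpl; rewrite H; reflexivity. Qed.

Lemma vrun_H x y t : vstep w x = VHalt y -> vrun w x (S t) = VHalt y.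
Proof. intros H; simpl; rewrite H; reflexivity. Qed.

Lemma mh_right h : h < n + 1 -> move_head n h HRight = Some (S h).
Proof. intros H; simpl. replace (h <? n + 1) with true by (symmetry; apply Nat.ltb_lt; lia). reflexivity. Qed.

Lemma cm_inc j : j < n + 1 -> cmove n j Inc = Some (S j).
Proof. intros H; simpl. replace (j <? n + 1) with true by (symmetry; apply Nat.ltb_lt; lia). reflexivity. Qed.

Lemma vstep_eq v h j v' hm cm h' j' :
  vdelta v (tape w h) (j =? 0) = (v', hm, cm) -> move_head n h hm = Some h' ->
  cmove n j cm = Some j' -> vstep w (v, h, j) = if vhalting v' then VHalt (v', h', j') else VRun (v', h', j').
Proof. intros E1 E2 E3. unfold vstep. rewrite E1. fold n. rewrite E2, E3. reflexivity. Qed.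

Lemma vstep_run v h j v' hm cm h' j' :
  vdelta v (tape w h) (j =? 0) = (v', hm, cm) -> move_head n h hm = Some h' ->
  cmove n j cm = Some j' -> vhalting v' = false -> vstep w (v, h, j) = VRun (v', h', j').
Proof. intros E1 E2 E3 E4. erewrite vstep_eq; eauto. rewrite E4; reflexivity. Qed.

Lemma vstep_halt v h j v' hm cm h' j' :
  vdelta v (tape w h) (j =? 0) = (v', hm, cm) -> move_head n h hm = Some h' ->
  cmove n j cm = Some j' -> vhalting v' = true -> vstep w (v, h, j) = VHalt (v', h', j').
Proof. intros E1 E2 E3 E4. erewrite vstep_eq; eauto. rewrite E4; reflexivity. Qed.

Ltac vfix := match goal with |- vrun _ (?a,?b,?c) ?t = vrun _ (?a,?d,?e) ?t =>
  replace b with d by lia; replace c with e by lia; reflexivity end.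
Ltac isrw := rewrite ?is_cent_tape, ?is_dollar_tape.
Ltac leb_true := match goal with |- context [?a <=? ?b] => replace (a <=? b) with true by (symmetry; apply Nat.leb_le; lia) end.
Ltac leb_false := match goal with |- context [?a <=? ?b] => replace (a <=? b) with false by (symmetry; apply Nat.leb_nle; lia) end.

Lemma par_loop d : forall h b j t, h + d = n + 1 -> 1 <= h ->
  vrun w (Par b, h, j) (d + t) = vrun w (Par (xorb b (Nat.odd d)), n + 1, j) t.
Proof.
  induction d; intros h b j t Hd Hh.
  - rewrite Bool.xorb_false_r. simpl. replace h with (n + 1) by lia. reflexivity.
  - simpl (S d + t). rewrite (vrun_S _ (Par (negb b), S h, j)).
    + rewrite IHd by lia. f_equal. f_equal. f_equal. rewrite Nat.odd_succ, <- Nat.negb_odd.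
      destruct b, (Nat.odd d); reflexivity.
    + eapply vstep_run; [ unfold vdelta; isrw; leb_false; replace (h =? 0) with false by (symmetry; apply Nat.eqb_neq; lia); reflexivity | apply mh_right; lia | reflexivity | reflexivity].
Qed.

Lemma left_loop v h : forall j t, h <= n + 1 ->
  (forall h', 1 <= h' <= n + 1 -> vdelta v (tape w h') (j =? 0) = (v, HLeft, CStay)) ->
  vhalting v = false ->
  vrun w (v, h, j) (h + t) = vrun w (v, 0, j) t.
Proof.
  induction h; intros j t Hh Hd Hv; auto.
  simpl (S h + t). rewrite (vrun_S _ (v, h, j)).
  - apply IHh; auto; lia.
  - eapply vstep_run; [apply Hd; lia | reflexivity | reflexivity | exact Hv].
Qed.

Lemma T_loop j : forall h t, h + j <= n + 1 -> vrun w (TT, h, j) (j + t) = vrun w (TT, h + j, 0) t.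
Proof.
  induction j; intros h t Hh.
  - rewrite Nat.add_0_r; reflexivity.
  - simpl (S j + t). rewrite (vrun_S _ (TT, S h, j)).
    + rewrite IHj by lia. vfix.
    + eapply vstep_run; [reflexivity | apply mh_right; lia | reflexivity | reflexivity].
Qed.

Lemma G1_loop x h : forall j t, h + j <= n + 1 -> vrun w (G1 x, h, j) (h + t) = vrun w (G1 x, 0, h + j) t.
Proof.
  induction h; intros j t Hh.
  - reflexivity.
  - simpl (S h + t). rewrite (vrun_S _ (G1 x, h, S j)).
    + rewrite IHh by lia. vfix.
    + eapply vstep_run; [ unfold vdelta; isrw; reflexivity | reflexivity | apply cm_inc; lia | reflexivity].
Qed.

Lemma G2_loop x d : forall h j t, h + d = n + 1 -> vrun w (G2 x, h, j) (d + t) = vrun w (G2 x, n + 1, j) t.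
Proof.
  induction d; intros h j t Hh.
  - replace h with (n + 1) by lia. reflexivity.
  - simpl (S d + t). rewrite (vrun_S _ (G2 x, S h, j)).
    + apply IHd; lia.
    + eapply vstep_run; [ unfold vdelta; isrw; leb_false; reflexivity | apply mh_right; lia | reflexivity | reflexivity].
Qed.

Lemma G3_loop x j : forall h t, j <= h -> vrun w (G3 x, h, j) (j + t) = vrun w (G3 x, h - j, 0) t.
Proof.
  induction j; intros h t Hh.
  - rewrite Nat.sub_0_r; reflexivity.
  - destruct h as [|h]; [lia|].
    simpl (S j + t). rewrite (vrun_S _ (G3 x, h, j)).
    + rewrite IHj by lia. reflexivity.
    + eapply vstep_run; reflexivity.
Qed.

Lemma G4_loop d : forall h j t, h + d = n + 1 -> j <= h ->
  vrun w (G4, h, j) (d + t) = vrun w (G4, n + 1, j + d) t.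
Proof.
  induction d; intros h j t Hh Hj.
  - rewrite Nat.add_0_r. replace h with (n + 1) by lia. reflexivity.
  - simpl (S d + t). rewrite (vrun_S _ (G4, S h, S j)).
    + rewrite IHd by lia. vfix.
    + eapply vstep_run; [ unfold vdelta; isrw; leb_false; reflexivity | apply mh_right; lia | apply cm_inc; lia | reflexivity].
Qed.


Definition Pal_from i := forall k, i <= k -> k <= n -> nth_error w (k - 1) = nth_error w (n - k).

Lemma tape_end : tape w (S n) = dollar.
Proof. simpl. destruct (nth_error w n) eqn:E; auto. exfalso.
  assert (n < length w) by (apply nth_error_Some; congruence). unfold n in H; lia. Qed.

Lemma sym_eqb_spec x y : sym_eqb x y = true <-> x = y.
Proof. destruct x, y; simpl; split; congruence. Qed.

Lemma main_loop d : forall i, i + d = n + 1 -> 1 <= i ->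
  exists t v h j, vrun w (TT, 0, i) t = VHalt (v, h, j) /\ t <= (d + 1) * (6 * n + 9) /\
    (v = Acc <-> Pal_from i) /\ (v = Acc -> j = 1).
Proof.
  induction d as [|d IH]; intros i Hi H1.
  - exists ((n + 1) + 1), Acc, (S n), 1. split; [|split; [lia|split]].
    + replace i with (n + 1) by lia. rewrite T_loop by lia. replace (0 + (n + 1)) with (S n) by lia.
      apply vrun_H. eapply vstep_halt; [ unfold vdelta; rewrite tape_end; reflexivity | reflexivity | apply cm_inc; lia | reflexivity].
    + split; auto. intros _ k Hk1 Hk2. lia.
    + auto.
  - assert (Hin : i <= n) by lia.
    destruct (tape_mid i) as (x & Hx & Hnx); [lia|].
    destruct (tape_mid (n + 1 - i)) as (y & Hy & Hny); [lia|].
    replace (n + 1 - i - 1) with (n - i) in Hny by lia.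
    assert (Hpal : Pal_from i <-> x = y /\ Pal_from (S i)).
    { split.
      - intros Hp. split.
        + specialize (Hp i (le_n i) Hin). congruence.
        + intros k Hk1 Hk2. apply Hp; lia.
      - intros [<- Hp] k Hk1 Hk2. destruct (Nat.eq_dec k i) as [->|Hne].
        + congruence.
        + apply Hp; lia. }
    assert (Hpre : forall r, vrun w (TT, 0, i) (i + S (i + S ((n + 1) + S (i + r)))) =
                             vrun w (G3 x, n + 1 - i, 0) r).
    { intros r.
      rewrite T_loop by lia. replace (0 + i) with i by lia.
      rewrite (vrun_S _ (G1 x, i, 0)).
      2:{ eapply vstep_run; [ unfold vdelta; rewrite Hx; reflexivity | reflexivity | reflexivity | reflexivity]. }
      rewrite G1_loop by lia. replace (i + 0) with i by lia.
      rewrite (vrun_S _ (G2 x, 0, i)).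
      2:{ eapply vstep_run; [ unfold vdelta; isrw; reflexivity | reflexivity | reflexivity | reflexivity]. }
      rewrite G2_loop by lia.
      rewrite (vrun_S _ (G3 x, n + 1, i)).
      2:{ eapply vstep_run; [ unfold vdelta; isrw; leb_true; reflexivity | reflexivity | reflexivity | reflexivity]. }
      rewrite G3_loop by lia. reflexivity. }
    destruct (sym_eqb x y) eqn:Exy.
    + apply sym_eqb_spec in Exy. subst y.
      destruct (IH (S i)) as (t' & v & h & j & Hr & Ht & Hv & Hj); [lia|lia|].
      exists (i + S (i + S ((n + 1) + S (i + S (i + S ((n + 1) + S t')))))), v, h, j.
      split; [|split; [nia|split]].
      * rewrite Hpre.
        rewrite (vrun_S _ (G4, n + 1 - i, 0)).
        2:{ eapply vstep_run; [ unfold vdelta; rewrite Hy; replace (sym_eqb x x) with true by (destruct x; reflexivity); reflexivity | reflexivity | reflexivity | reflexivity]. }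
        rewrite (G4_loop i) by lia. replace (0 + i) with i by lia.
        rewrite (vrun_S _ (G5, n + 1, i)).
        2:{ eapply vstep_run; [ unfold vdelta; isrw; leb_true; reflexivity | reflexivity | reflexivity | reflexivity]. }
        rewrite left_loop; [ | lia | | reflexivity].
        2:{ intros h' Hh'. unfold vdelta; isrw. replace (h' =? 0) with false by (symmetry; apply Nat.eqb_neq; lia). reflexivity. }
        rewrite (vrun_S _ (TT, 0, S i)).
        2:{ eapply vstep_run; [ unfold vdelta; isrw; reflexivity | reflexivity | apply cm_inc; lia | reflexivity]. }
        exact Hr.
      * rewrite Hv, Hpal. tauto.
      * exact Hj.
    + exists (i + S (i + S ((n + 1) + S (i + 1)))), Rej, (n + 1 - i), 0.
      split; [|split; [nia|split]].
      * rewrite Hpre. apply vrun_H.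
        eapply vstep_halt; [ unfold vdelta; rewrite Hy, Exy; reflexivity | reflexivity | reflexivity | reflexivity].
      * split; [discriminate|]. rewrite Hpal. intros [<- _]. destruct x; discriminate.
      * discriminate.
Qed.

Lemma start : exists t v h j, vrun w (Par false, 0, 0) t = VHalt (v, h, j) /\
   t <= 2 * n + 4 + (n + 1) * (6 * n + 9) /\
   (v = Acc <-> Nat.even n = true /\ Pal_from 1) /\ (v = Acc -> j = 1).
Proof.
  assert (Hpre : forall r, vrun w (Par false, 0, 0) (S (n + r)) = vrun w (Par (Nat.odd n), n + 1, 0) r).
  { intros r. rewrite (vrun_S _ (Par false, 1, 0)).
    2:{ eapply vstep_run; [ unfold vdelta; isrw; leb_false; reflexivity | apply mh_right; lia | reflexivity | reflexivity]. }
    rewrite par_loop by lia. reflexivity. }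
  destruct (Nat.odd n) eqn:Eo.
  - exists (S (n + 1)), Rej, (n + 1), 0. split; [|split; [nia|split]].
    + rewrite Hpre. apply vrun_H.
      eapply vstep_halt; [ unfold vdelta; isrw; leb_true; reflexivity | reflexivity | reflexivity | reflexivity].
    + split; [discriminate|]. rewrite <- Nat.negb_odd, Eo. intros [H _]; discriminate.
    + discriminate.
  - destruct (main_loop n 1) as (t' & v & h & j & Hr & Ht & Hv & Hj); [lia|lia|].
    exists (S (n + S ((n + 1) + S t'))), v, h, j. split; [|split; [nia|split]].
    + rewrite Hpre.
      rewrite (vrun_S _ (Back, n + 1, 0)).
      2:{ eapply vstep_run; [ unfold vdelta; isrw; leb_true; reflexivity | reflexivity | reflexivity | reflexivity]. }
      rewrite left_loop; [ | lia | | reflexivity].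
      2:{ intros h' Hh'. unfold vdelta; isrw. replace (h' =? 0) with false by (symmetry; apply Nat.eqb_neq; lia). reflexivity. }
      rewrite (vrun_S _ (TT, 0, 1)).
      2:{ eapply vstep_run; [ unfold vdelta; isrw; reflexivity | reflexivity | apply cm_inc; lia | reflexivity]. }
      exact Hr.
    + rewrite Hv, <- Nat.negb_odd, Eo. tauto.
    + exact Hj.
Qed.
End Alg.

Lemma pal1_rev w : Pal_from w 1 <-> rev w = w.
Proof.
  unfold Pal_from. split.
  - intros Hp. apply nth_error_ext. intros m. rewrite nth_error_rev.
    destruct (m <? length w) eqn:E.
    + apply Nat.ltb_lt in E. assert (H := Hp (S m) ltac:(lia) ltac:(lia)).
      replace (S m - 1) with m in H by lia. rewrite H. f_equal; lia.
    + apply Nat.ltb_nlt in E. symmetry. apply nth_error_None. lia.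
  - intros Hr k Hk1 Hk2. rewrite <- Hr at 1. rewrite nth_error_rev.
    replace (k - 1 <? length w) with true by (symmetry; apply Nat.ltb_lt; lia).
    f_equal. lia.
Qed.

Lemma lpal_iff w : Lpal w <-> Nat.even (length w) = true /\ Pal_from w 1.
Proof.
  rewrite pal1_rev. split.
  - intros [u ->]. split.
    + rewrite length_app, length_rev. replace (length u + length u) with (2 * length u) by lia.
      apply Nat.even_even.
    + rewrite rev_app_distr, rev_involutive. reflexivity.
  - intros [He Hr]. apply Nat.even_spec in He. destruct He as [k Hk].
    exists (firstn k w).
    assert (E : firstn k (rev w) = rev (skipn (length w - k) w)) by apply firstn_rev.
    rewrite Hr in E. replace (length w - k) with k in E by lia.
    rewrite <- (firstn_skipn k w) at 1. f_equal. rewrite E, rev_involutive. reflexivity.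
Qed.

Theorem theorem4 :
  exists M : OIA,
    forall lam A0 : R, (0 < lam)%R -> (0 < A0)%R ->
      exists c : nat,
        recognizes_in_time M lam A0 Lpal (fun n => c * (n * n) + c).
Proof.
  exists M. intros lam A0 _ _. exists 200. intros w.
  destruct (start w) as (tv & v & h & j & Hr & Ht & Hv & Hj).
  destruct (init2 lam A0 w) as (c0 & Hc0 & Hg0).
  destruct (vsim lam A0 w tv _ c0 _ Hg0 Hr) as (c' & Hc' & Hg').
  assert (Hrun : run M lam A0 w (2 + 2 * tv) = Halted c').
  { rewrite run_runc, runc_add, Hc0. exact Hc'. }
  exists (2 + 2 * tv). rewrite Hrun. split; [exact I|]. split.
  - pose proof (runc_moves lam A0 w (2 + 2 * tv) (init_cfg M w)) as Hm.
    rewrite <- run_runc, Hrun in Hm. simpl in Hm. simpl. nia.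
  - destruct Hg' as (Hq & _ & HJ & HK & Hs & _).
    simpl. rewrite HJ, HK, det_out_K0, Nat.even_even, Nat.div2_double, Hs, Hq.
    rewrite lpal_iff, <- Hv. split.
    + intros [Ha _]. destruct v; try discriminate; reflexivity.
    + intros ->. rewrite (Hj eq_refl). split; reflexivity.
Qed.
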